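(* Let $\mathcal{R}_0>0$ and let $\kappa:[0,1]\to[0,\infty)$ be a non-decreasing function with $\kappa(0)=0$ and $\kappa(i)>0$ for all $i>0$. Consider the initial value problem \[ \frac{ds}{d\tau}=-\mathcal{R}_0\frac{1}{1+\kappa(i)}\,s\,i,\qquad \frac{di}{d\tau}=\Big(\mathcal{R}_0\frac{1}{1+\kappa(i)}\,s-1\Big)i, \] with initial conditions $s(0)=s_0\ge 0$, $i(0)=i_0>0$ (and $r_0\ge 0$ with $s_0+i_0+r_0=1$), satisfying $s_0\mathcal{R}_0>1+\kappa(i_0)$, and assume its solution $(s(\tau),i(\tau))$ is non-negative. Let $(s^0(\tau),i^0(\tau))$ denote the solution of the same initial value problem with $\kappa\equiv 0$ (the classical SIR model $ds/d\tau=-\mathcal{R}_0 s i$, $di/d\tau=(\mathcal{R}_0 s-1)i$) with the same $\mathcal{R}_0$, $s_0$, $i_0$. Let $i_{max}=\max_{\tau\ge 0} i(\tau)$ and $i^0_{max}=\max_{\tau\ge0} i^0(\tau)$. Then \[ i_{max}<i^0_{max}. \]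
   Context: This is the non-dimensional ''feedback SIR'' (fSIR) model: $s$ and $i$ are the fractions of susceptible and infected individuals, $r=1-s-i$ the recovered fraction, $\tau$ is rescaled time, $\mathcal{R}_0$ the basic reproduction number, and $\kappa(i)$ the ''mitigation function'', giving the infection-dependent reproduction number $\mathcal{R}(i)=\mathcal{R}_0/(1+\kappa(i))$. The paper's standing assumptions on $\kappa$ are: non-negative, non-decreasing, $\kappa(0)=0$. *)

(* Defs.v *)
From Stdlib Require Import Reals.
From Coquelicot Require Import Coquelicot.
Open Scope R_scope.

Definition fSIR_solution (R0 : R) (kappa : R -> R) (s0 i0 : R)
  (s i : R -> R) : Prop :=
  s 0 = s0 /\ i 0 = i0 /\
  forall t, 0 <= t ->
    is_derive s t (- R0 * (1 / (1 + kappa (i t))) * s t * i t) /\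
    is_derive i t ((R0 * (1 / (1 + kappa (i t))) * s t - 1) * i t).

Definition is_max_on_nonneg (f : R -> R) (m : R) : Prop :=
  exists t, 0 <= t /\ f t = m /\ forall t', 0 <= t' -> f t' <= m.

(* Main.v *)
Require Import Defs.
From Stdlib Require Import Reals Lra Psatz Classical.
From Coquelicot Require Import Coquelicot.
Open Scope R_scope.

Lemma is_derive_eq (f : R -> R) x (l l' : R) : is_derive f x l -> l = l' -> is_derive f x l'.
Proof. intros H ->; exact H. Qed.

Lemma L_cont (f : R -> R) x d : is_derive f x d -> continuity_pt f x.
Proof. intro H. apply continuity_pt_filterlim. apply (ex_derive_continuous f x). exists d; exact H. Qed.

Lemma L_mono (f df : R -> R) a b : a <= b ->
  (forall x, a <= x <= b -> is_derive f x (df x)) ->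
  (forall x, a <= x <= b -> 0 <= df x) -> f a <= f b.
Proof.
  intros Hab Hd Hp.
  assert (H1 : forall x, Rmin a b < x < Rmax a b -> is_derive f x (df x)).
  { rewrite Rmin_left, Rmax_right by lra. intros; apply Hd; lra. }
  assert (H2 : forall x, Rmin a b <= x <= Rmax a b -> continuity_pt f x).
  { rewrite Rmin_left, Rmax_right by lra. intros; eapply L_cont; apply Hd; lra. }
  destruct (MVT_gen f a b df H1 H2) as [c [Hc Heq]].
  rewrite Rmin_left, Rmax_right in Hc by lra.
  assert (0 <= df c * (b - a)) by (apply Rmult_le_pos; [apply Hp; lra | lra]).
  lra.
Qed.

Lemma L_strict (f df : R -> R) a b : a < b ->
  (forall x, a <= x <= b -> is_derive f x (df x)) ->
  (forall x, a <= x <= b -> df x < 0) -> f b < f a.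
Proof.
  intros Hab Hd Hp.
  assert (H1 : forall x, Rmin a b < x < Rmax a b -> is_derive f x (df x)).
  { rewrite Rmin_left, Rmax_right by lra. intros; apply Hd; lra. }
  assert (H2 : forall x, Rmin a b <= x <= Rmax a b -> continuity_pt f x).
  { rewrite Rmin_left, Rmax_right by lra. intros; eapply L_cont; apply Hd; lra. }
  destruct (MVT_gen f a b df H1 H2) as [c [Hc Heq]].
  rewrite Rmin_left, Rmax_right in Hc by lra.
  assert (df c < 0) by (apply Hp; lra).
  assert (df c * (b - a) < 0) by (apply Rmult_neg_pos; lra).
  lra.
Qed.

Lemma L_const (f : R -> R) a b : a <= b ->
  (forall x, a <= x <= b -> is_derive f x 0) -> f a = f b.
Proof.
  intros Hab Hd.
  assert (f a <= f b) by (apply (L_mono f (fun _ => 0)); auto; intros; lra).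
  assert (- f a <= - f b).
  { apply (L_mono (fun t => - f t) (fun _ => 0)); auto; try (intros; lra).
    intros x Hx. apply (is_derive_eq _ _ (opp 0)). apply (is_derive_opp f x 0). auto.
    unfold opp; simpl. lra. }
  lra.
Qed.

Lemma d_lin (f g : R -> R) df dg a b x : is_derive f x df -> is_derive g x dg ->
  is_derive (fun t => a * f t + b * g t) x (a * df + b * dg).
Proof.
  intros Hf Hg.
  apply (is_derive_plus (fun t => a * f t) (fun t => b * g t) x (a*df) (b*dg));
  apply is_derive_scal; auto.
Qed.

Lemma d_mul (f g : R -> R) df dg x : is_derive f x df -> is_derive g x dg ->
  is_derive (fun t => f t * g t) x (df * g x + f x * dg).
Proof.
  intros Hf Hg. apply (is_derive_mult f g x df dg Hf Hg). intros; apply Rmult_comm.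
Qed.

Lemma d_exp c x : is_derive (fun t => exp (c * t)) x (c * exp (c * x)).
Proof.
  apply (is_derive_eq _ _ (scal (c * 1) (exp (c*x)))).
  apply (is_derive_comp exp (fun t => c * t) x).
  apply is_derive_exp.
  apply is_derive_scal. apply (is_derive_id x).
  unfold scal; simpl. unfold mult; simpl. ring.
Qed.

Lemma d_ln (f : R -> R) d x : 0 < f x -> is_derive f x d ->
  is_derive (fun t => ln (f t)) x (d / f x).
Proof.
  intros Hp Hd. apply (is_derive_eq _ _ (scal d (/ f x))).
  apply (is_derive_comp ln f x). apply is_derive_ln; auto. auto.
  unfold scal; simpl. unfold mult; simpl. unfold Rdiv. ring.
Qed.

Lemma d_id x : is_derive (fun t : R => t) x 1.
Proof. apply (is_derive_id x). Qed.

Lemma is_derive_extR (f g : R -> R) x (l : R) :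
  (forall t, f t = g t) -> is_derive f x l -> is_derive g x l.
Proof. intros H1 H2. apply (is_derive_ext f g x l H1 H2). Qed.

Lemma phi_le R0 x : 0 < R0 -> 0 < x ->
  1 / R0 - ln (1 / R0) / R0 <= x - ln x / R0.
Proof.
  intros HR Hx.
  assert (Hl : ln (R0 * x) <= R0 * x - 1).
  { rewrite <- (ln_exp (R0 * x - 1)). apply ln_le. nra.
    pose proof (exp_ineq1_le (R0 * x - 1)). lra. }
  rewrite ln_mult in Hl by lra.
  replace (1 / R0) with (/ R0) by (field; lra).
  rewrite ln_Rinv by lra.
  apply (Rmult_le_reg_l R0); auto.
  replace (R0 * (/ R0 - - ln R0 / R0)) with (1 + ln R0) by (field; lra).
  replace (R0 * (x - ln x / R0)) with (R0 * x - ln x) by (field; lra).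
  lra.
Qed.

Lemma phi_lt R0 x : 0 < R0 -> 0 < x -> R0 * x <> 1 ->
  1 / R0 - ln (1 / R0) / R0 < x - ln x / R0.
Proof.
  intros HR Hx Hne.
  assert (Hl : ln (R0 * x) < R0 * x - 1).
  { rewrite <- (ln_exp (R0 * x - 1)). apply ln_increasing. nra.
    pose proof (exp_ineq1 (R0 * x - 1)). assert (R0 * x - 1 <> 0) by lra. specialize (H H0). lra. }
  rewrite ln_mult in Hl by lra.
  replace (1 / R0) with (/ R0) by (field; lra).
  rewrite ln_Rinv by lra.
  apply (Rmult_lt_reg_l R0); auto.
  replace (R0 * (/ R0 - - ln R0 / R0)) with (1 + ln R0) by (field; lra).
  replace (R0 * (x - ln x / R0)) with (R0 * x - ln x) by (field; lra).
  lra.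
Qed.

Lemma pos_lin (f a : R -> R) T M :
  (forall t, 0 <= t <= T -> is_derive f t (a t * f t)) ->
  (forall t, 0 <= t <= T -> - M <= a t) -> 0 < f 0 ->
  forall t, 0 <= t <= T -> 0 < f t.
Proof.
  intros Hd Ha H0.
  assert (Hnz : forall t, 0 <= t <= T -> f t <> 0).
  { intros t Ht Hz.
 pose (g := fun t => f t * f t * exp (2 * M * t)).
    assert (Hm : g 0 <= g t).
    { apply (L_mono g (fun x => exp (2 * M * x) * (2 * f x * f x * (a x + M)))); try lra.
      - intros x Hx. eapply is_derive_eq.
        apply (d_mul (fun t => f t * f t) (fun t => exp (2 * M * t))).
        apply d_mul; apply Hd; lra. apply d_exp. ring.
      - intros x Hx. apply Rmult_le_pos. pose proof (exp_pos (2*M*x)); lra.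
        assert (0 <= a x + M) by (specialize (Ha x); lra).
        assert (0 <= f x * f x) by nra. nra. }
    unfold g in Hm. rewrite Hz in Hm. rewrite Rmult_0_r, exp_0 in Hm. nra. }
  intros t Ht.
  destruct (Rtotal_order 0 (f t)) as [Hp|[He|Hn]]; auto.
  - exfalso; apply (Hnz t Ht); auto.
  - exfalso.
    assert (Ht0 : 0 < t). { destruct (Req_dec t 0) as [->|]; lra. }
    destruct (Ranalysis5.IVT_interv (fun x => - f x) 0 t) as [z [Hz Hfz]]; try lra.
    + intros x Hx. apply continuity_pt_opp. eapply L_cont. apply Hd. lra.
    + apply (Hnz z). lra. lra.
Qed.

Lemma fsir_part (R0 : R) (kappa : R -> R) (s0 i0 : R) (s i : R -> R)
  (HR0 : 0 < R0)
  (Hk_nonneg : forall x, 0 <= x <= 1 -> 0 <= kappa x)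
  (Hk_pos : forall x, 0 < x <= 1 -> 0 < kappa x)
  (Hs0 : 0 <= s0) (Hi0 : 0 < i0) (Hr0 : s0 + i0 <= 1)
  (Hthr : s0 * R0 > 1 + kappa i0)
  (Hsol : fSIR_solution R0 kappa s0 i0 s i)
  (Hnonneg : forall t, 0 <= t -> 0 <= s t /\ 0 <= i t) :
  exists imax, is_max_on_nonneg i imax /\
    imax < i0 + s0 - ln s0 / R0 - (1 / R0 - ln (1 / R0) / R0).
Proof.
  destruct Hsol as [Hs0e [Hi0e Hd]].
  set (K := fun t => 1 / (1 + kappa (i t))).
  assert (HdS : forall t, 0 <= t -> is_derive s t (- R0 * K t * s t * i t)).
  { intros t Ht; apply (Hd t Ht). }
  assert (HdI : forall t, 0 <= t -> is_derive i t ((R0 * K t * s t - 1) * i t)).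
  { intros t Ht; apply (Hd t Ht). }
  clear Hd.
  assert (Hsum : forall a b, 0 <= a <= b -> s b + i b <= s a + i a).
  { intros a b Hab. pose (g := fun t => -1 * s t + -1 * i t).
    assert (g a <= g b); [|unfold g in *; lra].
    apply (L_mono g i); try lra.
    - intros x Hx. eapply is_derive_eq. apply d_lin. apply HdS; lra. apply HdI; lra. ring.
    - intros x Hx. apply Hnonneg; lra. }
  assert (Hle1 : forall t, 0 <= t -> s t <= 1 /\ i t <= 1).
  { intros t Ht. pose proof (Hsum 0 t (conj (Rle_refl 0) Ht)). pose proof (Hnonneg t Ht).
    rewrite Hs0e, Hi0e in H. lra. }
  assert (Hkn : forall t, 0 <= t -> 0 <= kappa (i t)).
  { intros t Ht. apply Hk_nonneg. pose proof (Hnonneg t Ht). pose proof (Hle1 t Ht). lra. }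
  assert (HK : forall t, 0 <= t -> 0 < K t <= 1).
  { intros t Ht. pose proof (Hkn t Ht). unfold K. split.
    apply Rdiv_lt_0_compat; lra.
    apply (Rmult_le_reg_r (1 + kappa (i t))). lra. field_simplify; lra. }
  assert (Hk0 : 0 <= kappa i0).
  { apply Hk_nonneg. lra. }
  assert (Hs0p : 0 < s0) by nra.
  assert (Hipos : forall t, 0 <= t -> 0 < i t).
  { intros t Ht. pose (g := fun t => i t * exp (1 * t)).
    assert (g 0 <= g t).
    { apply (L_mono g (fun x => exp (1 * x) * (R0 * K x * s x * i x))); auto.
      - intros x Hx. eapply is_derive_eq. apply d_mul. apply HdI; lra. apply d_exp. cbv beta; ring.
      - intros x Hx. pose proof (exp_pos (1*x)). pose proof (HK x (proj1 Hx)).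
        pose proof (Hnonneg x (proj1 Hx)).
        apply Rmult_le_pos; [lra|]. apply Rmult_le_pos; [|lra]. apply Rmult_le_pos; [|lra]. nra. }
    unfold g in H. rewrite Hi0e, Rmult_0_r, exp_0 in H. pose proof (exp_pos (1*t)).
    destruct (Rle_dec (i t) 0); [|lra]. nra. }
  assert (Hspos : forall t, 0 <= t -> 0 < s t).
  { intros t Ht. pose (g := fun t => s t * exp (R0 * t)).
    assert (g 0 <= g t).
    { apply (L_mono g (fun x => exp (R0 * x) * (R0 * s x * (1 - K x * i x)))); auto.
      - intros x Hx. eapply is_derive_eq. apply d_mul. apply HdS; lra. apply d_exp. cbv beta; ring.
      - intros x Hx. pose proof (exp_pos (R0*x)). pose proof (HK x (proj1 Hx)).
        pose proof (Hnonneg x (proj1 Hx)). pose proof (Hle1 x (proj1 Hx)).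
        apply Rmult_le_pos; [lra|]. apply Rmult_le_pos; [nra|]. nra. }
    unfold g in H. rewrite Hs0e, Rmult_0_r, exp_0 in H. pose proof (exp_pos (R0*t)).
    destruct (Rle_dec (s t) 0); [|lra]. nra. }
  assert (Hk1 : forall t, 0 <= t -> K t < 1).
  { intros t Ht. pose proof (Hipos t Ht). pose proof (Hle1 t Ht).
    assert (0 < kappa (i t)) by (apply Hk_pos; lra). unfold K.
    apply (Rmult_lt_reg_r (1 + kappa (i t))). lra. field_simplify; lra. }
  set (V := fun t => i t + s t - ln (s t) / R0).
  assert (HdV : forall t, 0 <= t -> is_derive V t (- i t * (1 - K t))).
  { intros t Ht. pose proof (Hspos t Ht).
    apply (is_derive_extR (fun t => 1 * (1 * i t + 1 * s t) + (- / R0) * ln (s t))).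
    { intros u. unfold V. field. lra. }
    eapply is_derive_eq. apply d_lin. apply d_lin. apply HdI; lra. apply HdS; lra.
    apply d_ln. auto. apply HdS; lra. field. lra. }
  assert (HVs : forall t, 0 < t -> V t < V 0).
  { intros t Ht. apply (L_strict V (fun x => - i x * (1 - K x))); auto.
    - intros x Hx; apply HdV; lra.
    - intros x Hx. pose proof (Hipos x (proj1 Hx)). pose proof (Hk1 x (proj1 Hx)). nra. }
  assert (Hbound : forall t, 0 <= t -> i t < i0 + s0 - ln s0 / R0 - (1 / R0 - ln (1 / R0) / R0)).
  { intros t Ht. pose proof (phi_le R0 (s t) HR0 (Hspos t Ht)).
    destruct (Req_dec t 0) as [->|Hne].
    - rewrite Hi0e. pose proof (phi_lt R0 s0 HR0 Hs0p). assert (R0 * s0 <> 1) by nra. lra.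
    - pose proof (HVs t ltac:(lra)). unfold V in H0. rewrite Hs0e, Hi0e in H0. lra. }
  assert (Hev : exists T, 0 <= T /\ forall t, T <= t -> i t < i0).
  { apply NNPP; intro Hn.
    assert (H' : forall T, 0 <= T -> exists t, T <= t /\ i0 <= i t).
    { intros T HT. apply NNPP; intro Hn2. apply Hn. exists T. split; auto.
      intros t Ht. apply Rnot_le_lt. intro. apply Hn2. exists t; auto. }
    assert (Hind : forall n : nat, exists t, 0 <= t /\ s t + i t <= s0 + i0 - INR n * (i0 * i0 / 4)).
    { induction n.
      - exists 0. rewrite Hs0e, Hi0e; simpl; lra.
      - destruct IHn as [t [Ht Hst]]. destruct (H' t Ht) as [t' [Htt' Hi']].
        assert (Hlow : forall x, t' <= x <= t' + i0 / 2 -> i0 / 2 <= i x).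
        { intros x Hx. pose (h := fun x => 1 * i x + 1 * x).
          assert (h t' <= h x); [|unfold h in *; lra].
          apply (L_mono h (fun x => 1 * ((R0 * K x * s x - 1) * i x) + 1 * 1)); try lra.
          - intros y Hy. apply d_lin. apply HdI; lra. apply d_id.
          - intros y Hy. pose proof (Hnonneg y ltac:(lra)). pose proof (Hle1 y ltac:(lra)).
            pose proof (HK y ltac:(lra)). assert (0 <= R0 * K y * s y) by
            (apply Rmult_le_pos; [|lra]; apply Rmult_le_pos; lra). nra. }
        exists (t' + i0 / 2). split; [lra|].
        pose (g := fun x => 1 * (-1 * s x + -1 * i x) + (- (i0 / 2)) * x).
        assert (g t' <= g (t' + i0 / 2)).
        { apply (L_mono g (fun x => 1 * (-1 * (- R0 * K x * s x * i x) + -1 * ((R0 * K x * s x - 1) * i x)) + (- (i0 / 2)) * 1)); try lra.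
          - intros y Hy. apply d_lin. apply d_lin. apply HdS; lra. apply HdI; lra. apply d_id.
          - intros y Hy. pose proof (Hlow y Hy). lra. }
        unfold g in H. pose proof (Hsum t t' (conj Ht Htt')). rewrite S_INR. nra. }
    destruct (INR_archimed (i0 * i0 / 4) 1) as [n Hn']. nra.
    destruct (Hind n) as [t [Ht Hst]]. pose proof (Hnonneg t Ht). lra. }
  destruct Hev as [T [HT HTi]].
  destruct (continuity_ab_min (fun t => - i t) 0 T HT) as [Mx [HMx HMxr]].
  { intros c Hc. apply continuity_pt_opp. eapply L_cont. apply HdI. lra. }
  exists (i Mx). split.
  - exists Mx. repeat split; try lra. intros t' Ht'.
    destruct (Rle_dec t' T).
    + pose proof (HMx t' (conj Ht' r)). simpl in H; lra.
    + pose proof (HTi t' ltac:(lra)). pose proof (HMx 0 (conj (Rle_refl 0) HT)).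
      simpl in H0. rewrite Hi0e in H0. lra.
  - apply Hbound. lra.
Qed.

Lemma cl_part (R0 : R) (s0 i0 : R) (s i : R -> R)
  (HR0 : 0 < R0) (Hs0p : 0 < s0) (Hi0 : 0 < i0) (Hr0 : s0 + i0 <= 1)
  (Hthr : s0 * R0 > 1)
  (Hsol : fSIR_solution R0 (fun _ => 0) s0 i0 s i) :
  is_max_on_nonneg i (i0 + s0 - ln s0 / R0 - (1 / R0 - ln (1 / R0) / R0)).
Proof.
  destruct Hsol as [Hs0e [Hi0e Hd]].
  assert (HdS : forall t, 0 <= t -> is_derive s t (- R0 * i t * s t)).
  { intros t Ht. eapply is_derive_eq. apply (Hd t Ht). field. }
  assert (HdI : forall t, 0 <= t -> is_derive i t ((R0 * s t - 1) * i t)).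
  { intros t Ht. eapply is_derive_eq. apply (Hd t Ht). field. }
  clear Hd.
  assert (Hpos : forall t, 0 <= t -> 0 < s t /\ 0 < i t).
  { intros t Ht.
    destruct (continuity_ab_min s 0 t Ht) as [ms [Hms Hmsr]].
    { intros c Hc. eapply L_cont. apply HdS. lra. }
    destruct (continuity_ab_min (fun u => - i u) 0 t Ht) as [mi [Hmi Hmir]].
    { intros c Hc. apply continuity_pt_opp. eapply L_cont. apply HdI. lra. }
    split.
    - apply (pos_lin s (fun u => - R0 * i u) t (R0 * i mi)); try lra.
      + intros u Hu. apply HdS; lra.
      + intros u Hu. pose proof (Hmi u Hu). simpl in H. nra.
    - apply (pos_lin i (fun u => R0 * s u - 1) t (1 - R0 * s ms)); try lra.
      + intros u Hu. apply HdI; lra.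
      + intros u Hu. pose proof (Hms u Hu). nra. }
  assert (Hinv : 1 / R0 < s0).
  { apply (Rmult_lt_reg_l R0); [lra|]. replace (R0 * (1 / R0)) with 1 by (field; lra). lra. }
  set (t1 := 2 / i0).
  assert (Ht1 : 0 < t1) by (unfold t1; apply Rdiv_lt_0_compat; lra).
  assert (Hst1 : s t1 < 1 / R0).
  { apply Rnot_le_lt. intro Hc.
    assert (Hsx : forall x, 0 <= x <= t1 -> 1 / R0 <= s x).
    { intros x Hx. pose (g := fun u => - s u).
      assert (g x <= g t1); [|unfold g in *; lra].
      apply (L_mono g (fun u => - (- R0 * i u * s u))); try lra.
      - intros y Hy. apply (is_derive_opp s y). apply HdS; lra.
      - intros y Hy. pose proof (Hpos y ltac:(lra)). assert (0 < i y * s y) by nra. nra. }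
    assert (Hix : forall x, 0 <= x <= t1 -> i0 <= i x).
    { intros x Hx. rewrite <- Hi0e. apply (L_mono i (fun u => (R0 * s u - 1) * i u)); try lra.
      - intros y Hy. apply HdI; lra.
      - intros y Hy. pose proof (Hpos y ltac:(lra)). pose proof (Hsx y ltac:(lra)).
        assert (1 <= R0 * s y).
        { replace 1 with (R0 * (1 / R0)) by (field; lra). nra. }
        nra. }
    pose (g := fun x => 1 * (-1 * s x + -1 * i x) + (- i0) * x).
    assert (g 0 <= g t1).
    { apply (L_mono g (fun x => 1 * (-1 * (- R0 * i x * s x) + -1 * ((R0 * s x - 1) * i x)) + (- i0) * 1)); try lra.
      - intros y Hy. apply d_lin. apply d_lin. apply HdS; lra. apply HdI; lra. apply d_id.
      - intros y Hy. pose proof (Hix y Hy). lra. }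
    unfold g in H. rewrite Hs0e, Hi0e in H. pose proof (Hpos t1 ltac:(lra)).
    assert (i0 * t1 = 2) by (unfold t1; field; lra). lra. }
  destruct (Ranalysis5.IVT_interv (fun u => 1 / R0 - s u) 0 t1) as [z [Hz Hsz]]; try lra.
  { intros a Ha. apply continuity_pt_minus. apply continuity_pt_const. intros u v; reflexivity.
    eapply L_cont. apply HdS. lra. }
  set (V := fun t => i t + s t - ln (s t) / R0).
  assert (HV : forall t, 0 <= t -> V t = V 0).
  { intros t Ht. symmetry. apply L_const; auto. intros x Hx.
    pose proof (Hpos x (proj1 Hx)).
    apply (is_derive_extR (fun t => 1 * (1 * i t + 1 * s t) + (- / R0) * ln (s t))).
    { intros u. unfold V. field. lra. }
    eapply is_derive_eq. apply d_lin. apply d_lin. apply HdI; lra. apply HdS; lra.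
    apply d_ln. lra. apply HdS; lra. field. lra. }
  exists z. split; [lra|]. split.
  - pose proof (HV z ltac:(lra)). unfold V in H. rewrite Hs0e, Hi0e in H.
    assert (s z = 1 / R0) by lra. rewrite H0 in H. lra.
  - intros t' Ht'. pose proof (HV t' Ht'). unfold V in H. rewrite Hs0e, Hi0e in H.
    pose proof (phi_le R0 (s t') HR0 (proj1 (Hpos t' Ht'))). lra.
Qed.

Theorem proposition2
  (R0 : R) (kappa : R -> R) (s0 i0 : R)
  (s i s_cl i_cl : R -> R)
  (HR0 : 0 < R0)
  (Hk_nonneg : forall x, 0 <= x <= 1 -> 0 <= kappa x)
  (Hk_mono : forall x y, 0 <= x -> x <= y -> y <= 1 -> kappa x <= kappa y)
  (Hk0 : kappa 0 = 0)
  (Hk_pos : forall x, 0 < x <= 1 -> 0 < kappa x)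
  (Hs0 : 0 <= s0) (Hi0 : 0 < i0) (Hr0 : s0 + i0 <= 1)
  (Hthr : s0 * R0 > 1 + kappa i0)
  (Hsol : fSIR_solution R0 kappa s0 i0 s i)
  (Hnonneg : forall t, 0 <= t -> 0 <= s t /\ 0 <= i t)
  (Hsol_cl : fSIR_solution R0 (fun _ => 0) s0 i0 s_cl i_cl) :
  exists imax i0max,
    is_max_on_nonneg i imax /\ is_max_on_nonneg i_cl i0max /\ imax < i0max.
Proof.
  assert (Hk : 0 <= kappa i0) by (apply Hk_nonneg; lra).
  assert (Hs0p : 0 < s0) by nra.
  destruct (fsir_part R0 kappa s0 i0 s i HR0 Hk_nonneg Hk_pos Hs0 Hi0 Hr0 Hthr Hsol Hnonneg)
    as [imax [Hm Hlt]].
  exists imax, (i0 + s0 - ln s0 / R0 - (1 / R0 - ln (1 / R0) / R0)).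
  split; [exact Hm|]. split; [|exact Hlt].
  apply (cl_part R0 s0 i0 s_cl i_cl); auto. lra.
Qed.
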